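(* Let $F$ be a recurrent set and let $X\subset F$ be a bifix code of finite $F$-degree $d$. Then for every $w\in F$, $\delta_X(w)=\min\{d,\delta_{K(X)}(w)\}$. In particular, $X$ is determined by its $F$-degree and its kernel.
   Context: $A$ is a finite alphabet. $F\subset A^*$ is recurrent if it is nonempty, closed under factors, and for all $u,w\in F$ there is $v\in F$ with $uvw\in F$. A bifix code is a set of nonempty words none of which is a proper prefix or proper suffix of another. For a set $Y$, a parse of $w$ with respect to $Y$ is a triple $(v,y,u)$ with $w=vyu$, $v\in A^*\setminus A^*Y$, $y\in Y^*$, $u\in A^*\setminus YA^*$; $\delta_Y(w)$ is the number of parses, and $d_F(X)=\max_{w\in F}\delta_X(w)$. The kernel is $K(X)=\{x\in X\mid A^+xA^+\cap X\ne\emptyset\}$. *)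

(* Defs.v *)
From mathcomp Require Import all_boot.
From Stdlib Require Import ClassicalEpsilon.
Set Implicit Arguments. Unset Strict Implicit. Unset Printing Implicit Defensive.

Definition lang (A : Type) := seq A -> Prop.

Definition pb (P : Prop) : bool :=
  if excluded_middle_informative P then true else false.

Section Words.
Variable A : finType.

Definition factorial (F : lang A) : Prop :=
  forall w p m s : seq A, F w -> w = p ++ m ++ s -> F m.

Definition recurrent (F : lang A) : Prop :=
  (exists w, F w) /\ factorial F /\
  (forall u w, F u -> F w -> exists v, F v /\ F (u ++ v ++ w)).

Definition bifix_code (X : lang A) : Prop :=
  (forall x, X x -> x <> [::]) /\
  (forall x y s, X x -> X y -> y = x ++ s -> s = [::]) /\
  (forall x y p, X x -> X y -> y = p ++ x -> p = [::]).

Inductive star (Y : lang A) : seq A -> Prop :=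
| star_nil : star Y [::]
| star_cons y z : Y y -> star Y z -> star Y (y ++ z).

Definition in_AY (Y : lang A) (v : seq A) : Prop :=
  exists p y, v = p ++ y /\ Y y.
Definition in_YA (Y : lang A) (u : seq A) : Prop :=
  exists y s, u = y ++ s /\ Y y.

Definition is_parse (Y : lang A) (w v y u : seq A) : Prop :=
  w = v ++ y ++ u /\ ~ in_AY Y v /\ star Y y /\ ~ in_YA Y u.

(* delta_Y(w): number of parses of w.  A triple (v,y,u) with w = v y u is
   determined by (|v|, |v y|), so we count pairs i <= j <= |w|. *)
Definition delta (Y : lang A) (w : seq A) : nat :=
  \sum_(i < (size w).+1) \sum_(j < (size w).+1)
     pb (i <= j /\ is_parse Y w (take i w) (drop i (take j w)) (drop j w)).

Definition has_Fdegree (F X : lang A) (d : nat) : Prop :=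
  (forall w, F w -> delta X w <= d) /\ (exists w, F w /\ delta X w = d).

Definition kernel (X : lang A) : lang A :=
  fun x => X x /\ exists p s, p <> [::] /\ s <> [::] /\ X (p ++ x ++ s).

End Words.

(* Main.v *)
Require Import Defs.
From Stdlib Require Import ClassicalEpsilon FunctionalExtensionality PropExtensionality Lia.
From mathcomp Require Import all_boot.
Set Implicit Arguments. Unset Strict Implicit. Unset Printing Implicit Defensive.

Lemma pbP (P : Prop) : reflect P (pb P).
Proof. by rewrite /pb; case: excluded_middle_informative => h; constructor. Qed.

Lemma pbT (P : Prop) : P -> pb P = true.
Proof. by move=> h; apply/pbP. Qed.

Lemma pbF (P : Prop) : ~ P -> pb P = false.
Proof. by move=> h; apply/pbP. Qed.

Lemma sum_le1 n (f : 'I_n -> bool) :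
  (forall i j, f i -> f j -> i = j) -> \sum_(i < n) f i <= 1.
Proof.
move=> H; case: (pickP f) => [i fi | none].
  rewrite (bigD1 i) //= fi big1 // => j nji.
  by apply/eqP; rewrite eqb0; apply/negP => fj'; move: nji; rewrite (H _ _ fi fj') eqxx.
by rewrite big1 // => i _; rewrite none.
Qed.

Lemma sum_eq1 n (f : 'I_n -> bool) i0 :
  f i0 -> (forall j, f j -> j = i0) -> \sum_(i < n) f i = 1.
Proof.
move=> fi H; rewrite (bigD1 i0) //= fi big1 ?addn0 // => j nji.
by apply/eqP; rewrite eqb0; apply/negP => fj; move: nji; rewrite (H _ fj) eqxx.
Qed.

Lemma drop_take_cat (T : Type) i j (u : seq T) :
  i <= j -> drop i u = drop i (take j u) ++ drop j u.
Proof.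
elim: u i j => [|a u IH] [|i] [|j] //=.
  by rewrite cat_take_drop.
by move=> h; apply: IH.
Qed.

Lemma split3 (T : Type) i j (W : seq T) :
  i <= j -> W = take i W ++ drop i (take j W) ++ drop j W.
Proof.
move=> h; rewrite -(drop_take_cat _ h).
by rewrite cat_take_drop.
Qed.

Lemma two_prefix (T : Type) (x x' a b : seq T) :
  x ++ a = x' ++ b -> (exists s, x' = x ++ s) \/ (exists s, x = x' ++ s).
Proof.
elim: x x' => [|c x IH] [|c' x'] /=.
- by left; exists [::].
- by left; exists (c' :: x').
- by right; exists (c :: x).
- case=> -> /IH [[s ->]|[s ->]]; [left|right]; by exists s.
Qed.

Lemma cat_cancel (T : Type) (x a b : seq T) : x ++ a = x ++ b -> a = b.
Proof. by move=> h; have := congr1 (drop (size x)) h; rewrite !drop_size_cat. Qed.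

Definition pX (A : finType) (X : lang A) (u : seq A) : nat := pb (X u).
Definition nsuf (A : finType) (X : lang A) (u : seq A) :=
  \sum_(i < size u) pX X (drop i u).
Definition npre (A : finType) (X : lang A) (u : seq A) :=
  \sum_(i < size u) pX X (take i.+1 u).
Definition occ (A : finType) (X : lang A) (W : seq A) :=
  \sum_(j < (size W).+1) nsuf X (take j W).
Definition cr (A : finType) (X : lang A) (a t : seq A) :=
  \sum_(i < size a) pX X (drop i a ++ t).

Lemma nsuf_le1 (A : finType) (X : lang A) u : bifix_code X -> nsuf X u <= 1.
Proof.
case=> ne [pc sc]; apply: sum_le1 => i j /pbP Xi /pbP Xj.
wlog le : i j Xi Xj / i <= j.
  move=> H; case: (leqP i j) => h; first exact: H.
  by symmetry; apply: H => //; apply: ltnW.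
apply: val_inj => /=; apply/eqP; rewrite eqn_leq le /=.
have e := drop_take_cat u le.
have := sc _ _ _ Xj Xi e => /(congr1 size).
rewrite size_drop size_take (ltn_ord j) /= => /eqP.
by rewrite subn_eq0.
Qed.

Lemma npre_le1 (A : finType) (X : lang A) u : bifix_code X -> npre X u <= 1.
Proof.
case=> ne [pc sc]; apply: sum_le1 => i j /pbP Xi /pbP Xj.
wlog le : i j Xi Xj / i <= j.
  move=> H; case: (leqP i j) => h; first exact: H.
  by symmetry; apply: H => //; apply: ltnW.
apply: val_inj => /=; apply/eqP; rewrite eqn_leq le /=.
have le' : i.+1 <= j.+1 by [].
have e : take j.+1 u = take i.+1 u ++ drop i.+1 (take j.+1 u).
  by rewrite -{1}(cat_take_drop i.+1 (take j.+1 u)) take_takel.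
have := pc _ _ _ Xi Xj e => /(congr1 size).
rewrite size_drop size_takel ?(ltn_ord j) //= => /eqP.
by rewrite subn_eq0.
Qed.

Lemma nsuf_cons (A : finType) (X : lang A) a t :
  nsuf X (a :: t) = pX X (a :: t) + nsuf X t.
Proof. by rewrite /nsuf big_ord_recl. Qed.

Lemma occ_rcons (A : finType) (X : lang A) W a :
  occ X (rcons W a) = occ X W + nsuf X (rcons W a).
Proof.
rewrite /occ size_rcons big_ord_recr /= take_oversize ?size_rcons //.
congr (_ + _); apply: eq_bigr => j _ /=.
by rewrite -cats1 takel_cat // -ltnS.
Qed.

Lemma occ_cons (A : finType) (X : lang A) a W :
  occ X (a :: W) = occ X W + npre X (a :: W).
Proof.
rewrite /occ /npre big_ord_recl.
have -> : nsuf X (take ord0 (a :: W)) = 0 by rewrite /nsuf /= big_ord0.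
rewrite add0n -big_split; apply: eq_bigr => j _.
have -> : take (lift ord0 j) (a :: W) = a :: take j W by [].
by rewrite nsuf_cons addnC.
Qed.

Lemma nsuf_cat (A : finType) (X : lang A) a t :
  nsuf X (a ++ t) = cr X a t + nsuf X t.
Proof.
elim: a => [|c a IH] /=; first by rewrite /cr big_ord0.
by rewrite nsuf_cons IH /cr big_ord_recl /= addnA.
Qed.

Definition nonint (A : finType) (X : lang A) (b : seq A) :=
  forall p s, p <> [::] -> s <> [::] -> ~ X (p ++ b ++ s).

Lemma occ3 (A : finType) (X : lang A) a b c : nonint X b ->
  occ X (a ++ b ++ c) + occ X b = occ X (a ++ b) + occ X (b ++ c).
Proof.
move=> nb; elim/last_ind: c => [|c x IH]; first by rewrite !cats0.
rewrite -!rcons_cat !occ_rcons.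
have e : nsuf X (rcons (a ++ b ++ c) x) = nsuf X (rcons (b ++ c) x).
  rewrite !rcons_cat nsuf_cat.
  rewrite [cr _ _ _]big1 // => i _; apply/eqP; rewrite eqb0; apply/negP => /pbP.
  apply: nb.
    move/(congr1 size); rewrite size_drop /=; move/eqP; rewrite subn_eq0.
    by rewrite leqNgt ltn_ord.
  by case: (c).
rewrite e addnAC IH -addnA.
by [].
Qed.

Lemma occ_catr (A : finType) (X : lang A) p q : bifix_code X ->
  occ X (p ++ q) <= occ X p + size q.
Proof.
move=> bX; elim/last_ind: q => [|q x IH]; first by rewrite cats0 addn0.
rewrite -rcons_cat occ_rcons size_rcons addnS -addn1.
by apply: leq_add => //; apply: nsuf_le1.
Qed.

Lemma occ_catl (A : finType) (X : lang A) p q : bifix_code X ->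
  occ X (p ++ q) <= occ X q + size p.
Proof.
move=> bX; elim: p => [|c p IH] /=; first by rewrite addn0.
rewrite occ_cons addnS -addn1.
by apply: leq_add => //; apply: npre_le1.
Qed.

Lemma star_prefix (A : finType) (X : lang A) y1 : bifix_code X -> star X y1 ->
  forall y2 r, star X y2 -> y2 = y1 ++ r -> r = [::] \/ in_YA X r.
Proof.
move=> [ne [pc sc]]; elim=> [|x z Xx sz IH] y2 r s2 e.
  case: s2 e => [|x' z' Xx' _] /= e; first by left.
  by right; exists x', z'.
case: s2 e => [|x' z' Xx' sz'] e.
  by exfalso; apply: (ne _ Xx); case: x e {Xx IH} => //.
move: (e); rewrite -catA => /two_prefix [[t et]|[t et]].
  have t0 := pc _ _ _ Xx' Xx et; subst t; rewrite cats0 in et; subst x'.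
  by apply: (IH z') => //; move: e; rewrite -catA => /cat_cancel.
have t0 := pc _ _ _ Xx Xx' et; subst t; rewrite cats0 in et; subst x'.
by apply: (IH z') => //; move: e; rewrite -catA => /cat_cancel.
Qed.

Lemma parse_exists (A : finType) (X : lang A) s : bifix_code X ->
  exists k, k <= size s /\ star X (take k s) /\ ~ in_YA X (drop k s).
Proof.
move=> [ne [pc sc]]; move: {2}(size s) (leqnn (size s)) => n.
elim: n s => [|n IH] s hs.
  case: s hs => // _; exists 0; split=> //; split; first exact: star_nil.
  by case=> y [t [e Xy]]; apply: (ne _ Xy); case: y e {Xy}.
case: (pbP (in_YA X s)) => h; last first.
  exists 0; split=> //; split; first by rewrite take0; exact: star_nil.
  by rewrite drop0.
case: h => x [s' [e Xx]]; subst s.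
have xn : 0 < size x by rewrite lt0n size_eq0; apply/eqP/ne.
have hs' : size s' <= n.
  rewrite size_cat in hs; rewrite -ltnS; apply: leq_trans hs.
  by rewrite -{1}(add0n (size s')) ltn_add2r.
have [k [hk [sk nk]]] := IH s' hs'.
exists (size x + k); split; first by rewrite size_cat leq_add2l.
split.
  rewrite takeD take_size_cat // drop_size_cat //.
  by apply: star_cons.
by rewrite addnC -drop_drop drop_size_cat.
Qed.

Lemma parse_unique (A : finType) (X : lang A) s k1 k2 : bifix_code X ->
  k1 <= size s -> star X (take k1 s) -> ~ in_YA X (drop k1 s) ->
  k2 <= size s -> star X (take k2 s) -> ~ in_YA X (drop k2 s) -> k1 = k2.
Proof.
move=> bX.
wlog le : k1 k2 / k1 <= k2.
  move=> H h1 s1 n1 h2 s2 n2; case: (leqP k1 k2) => h.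
    exact: H.
  by symmetry; apply: H => //; apply: ltnW.
move=> h1 s1 n1 h2 s2 n2; apply/eqP; rewrite eqn_leq le /=; rewrite leqNgt; apply/negP => lt.
have e : take k2 s = take k1 s ++ drop k1 (take k2 s).
  by rewrite -{1}(cat_take_drop k1 (take k2 s)) take_takel.
have [r0|[x [r' [er Xx]]]] := star_prefix bX s1 s2 e.
  move: r0 => /(congr1 size); rewrite size_drop size_takel //= => /eqP.
  by rewrite subn_eq0 leqNgt lt.
apply: n1; exists x, (r' ++ drop k2 s); split=> //.
by rewrite catA -er -drop_take_cat.
Qed.

Lemma inner (A : finType) (X : lang A) (W : seq A) (i : 'I_(size W).+1) :
  bifix_code X ->
  \sum_(j < (size W).+1)
     pb (i <= j /\ is_parse X W (take i W) (drop i (take j W)) (drop j W))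
  = pb (~ in_AY X (take i W)).
Proof.
move=> bX; case: (pbP (~ in_AY X (take i W))) => h; last first.
  by rewrite big1 // => j _; apply/eqP; rewrite eqb0; apply/pbP => [[_ [_ [hh _]]]].
have [k [hk [sk nk]]] := parse_exists (drop i W) bX.
have lt : i + k < (size W).+1.
  have iW : (i : nat) <= size W by rewrite -ltnS.
  rewrite size_drop in hk; rewrite ltnS.
  have : i + k <= i + (size W - i) by rewrite leq_add2l.
  by rewrite subnKC.
have key : forall j : 'I_(size W).+1, i <= j ->
   (is_parse X W (take i W) (drop i (take j W)) (drop j W) <->
    star X (take (j - i) (drop i W)) /\ ~ in_YA X (drop (j - i) (drop i W))).
  move=> j ij; rewrite take_drop drop_drop subnK //; split.
    by case=> [_ [_ [? ?]]].
  by case=> ? ?; split; first exact: split3.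
apply: (@sum_eq1 _ _ (Ordinal lt)) => /=.
  apply/pbP; split; first exact: leq_addr.
  by apply/(key (Ordinal lt) (leq_addr _ _)); rewrite /= addKn.
move=> j /pbP [ij /key] => /(_ ij) [sj nj].
apply: val_inj => /=.
have := parse_unique bX _ _ _ hk sk nk => /(_ (j - i)).
have hj : j - i <= size (drop i W).
  by rewrite size_drop leq_sub2r // -ltnS.
move=> /(_ hj sj nj) <-.
by rewrite subnKC.
Qed.

Lemma nsufE (A : finType) (X : lang A) u : bifix_code X ->
  nsuf X u = pb (in_AY X u).
Proof.
move=> bX; have le1 := nsuf_le1 u bX.
case: (pbP (in_AY X u)) => h.
  apply/eqP; rewrite eqn_leq le1 /=.
  case: h => p [y [e Xy]].
  have ys : 0 < size y by case: bX => ne _; rewrite lt0n size_eq0; apply/eqP/ne.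
  have lt : size p < size u by rewrite e size_cat -{1}(addn0 (size p)) ltn_add2l.
  rewrite /nsuf (bigD1 (Ordinal lt)) //=.
  have -> : drop (size p) u = y by rewrite e drop_size_cat.
  by rewrite /pX (pbT Xy).
rewrite /nsuf big1 // => i _; rewrite /pX; apply/eqP; rewrite eqb0; apply/pbP => Xi.
by apply: h; exists (take i u), (drop i u); rewrite cat_take_drop.
Qed.

Lemma bridge (A : finType) (X : lang A) W : bifix_code X ->
  delta X W + occ X W = (size W).+1.
Proof.
move=> bX; rewrite /delta /occ -big_split /=.
rewrite (eq_bigr (fun _ => 1)).
  by rewrite sum1_card card_ord.
move=> i _; rewrite inner // nsufE //.
case: (pbP (in_AY X (take i W))) => h.
  by rewrite pbF.
by rewrite pbT.
Qed.

Lemma delta_prefix (A : finType) (X : lang A) p q : bifix_code X ->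
  delta X p <= delta X (p ++ q).
Proof.
move=> bX; move: (bridge p bX) (bridge (p ++ q) bX) (occ_catr p q bX).
rewrite size_cat => h1 h2 /leP; rewrite -!plusE in h1 h2 * => h3; apply/leP; lia.
Qed.

Lemma delta_suffix (A : finType) (X : lang A) p q : bifix_code X ->
  delta X q <= delta X (p ++ q).
Proof.
move=> bX; move: (bridge q bX) (bridge (p ++ q) bX) (occ_catl p q bX).
rewrite size_cat => h1 h2 /leP; rewrite -!plusE in h1 h2 * => h3; apply/leP; lia.
Qed.

Lemma delta3 (A : finType) (X : lang A) a b c : bifix_code X -> nonint X b ->
  delta X (a ++ b) + delta X (b ++ c) = delta X (a ++ b ++ c) + delta X b.
Proof.
move=> bX nb; move: (bridge (a ++ b) bX) (bridge (b ++ c) bX)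
  (bridge (a ++ b ++ c) bX) (bridge b bX) (occ3 a c nb).
rewrite !size_cat -!plusE => h1 h2 h3 h4 h5; lia.
Qed.

Lemma bifix_sub (A : finType) (X Y : lang A) :
  (forall x, Y x -> X x) -> bifix_code X -> bifix_code Y.
Proof.
move=> s [ne [pc sc]]; split; first by move=> x /s /ne.
split; first by move=> x y t /s hx /s hy; apply: pc.
by move=> x y t /s hx /s hy; apply: sc.
Qed.

Lemma key_lemma (A : finType) (F X : lang A) d w :
  recurrent F -> bifix_code X -> has_Fdegree F X d -> F w -> nonint X w ->
  d <= delta X w.
Proof.
move=> [_ [_ rec]] bX [hd [z [Fz dz]]] Fw nw.
have [v1 [_ F1]] := rec _ _ Fz Fw.
have [v2 [_ F2]] := rec _ _ F1 Fz.
have e := delta3 (z ++ v1) (v2 ++ z) bX nw.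
have l1 : delta X z <= delta X ((z ++ v1) ++ w) by rewrite -catA; apply: delta_prefix.
have l2 : delta X z <= delta X (w ++ v2 ++ z) by rewrite catA; apply: delta_suffix.
have l3 := hd _ F2.
have ee : (z ++ v1 ++ w) ++ v2 ++ z = (z ++ v1) ++ w ++ v2 ++ z by rewrite !catA.
rewrite ee in l3; rewrite dz in l1 l2.
move: e l1 l2 l3; rewrite -!plusE => e /leP l1 /leP l2 /leP l3; apply/leP; lia.
Qed.

Lemma occ_kernel_le (A : finType) (X : lang A) w :
  occ (kernel X) w <= occ X w.
Proof.
apply: leq_sum => j _; apply: leq_sum => i _; rewrite /pX.
by case: (pbP (kernel X _)) => // [[h _]]; rewrite pbT.
Qed.

Lemma occ_kernel_eq (A : finType) (X : lang A) w p s :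
  p <> [::] -> s <> [::] -> X (p ++ w ++ s) ->
  occ (kernel X) w = occ X w.
Proof.
move=> pn sn hX; apply: eq_bigr => j _; apply: eq_bigr => i _; rewrite /pX.
case: (pbP (X (drop i (take j w)))) => h; last first.
  by rewrite pbF // => [[h' _]].
rewrite pbT //; split=> //.
exists (p ++ take i (take j w)), (drop j w ++ s); split.
  by case: (p) pn.
split; first by case: (drop j w) => //; case: (s) sn.
have ew : w = (take i (take j w) ++ drop i (take j w)) ++ drop j w
  by rewrite !cat_take_drop.
by move: hX; rewrite {1}ew !catA.
Qed.

Theorem mainTheorem7 (A : finType) (F X : lang A) (d : nat) :
  recurrent F -> (forall x, X x -> F x) -> bifix_code X -> has_Fdegree F X d ->
  (forall w, F w -> delta X w = minn d (delta (kernel X) w)) /\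
  (forall Y : lang A, (forall y, Y y -> F y) -> bifix_code Y -> has_Fdegree F Y d ->
     (forall x, kernel Y x <-> kernel X x) -> forall x, Y x <-> X x).
Proof.
have part1 : forall (X : lang A), recurrent F -> bifix_code X -> has_Fdegree F X d ->
   forall w, F w -> delta X w = minn d (delta (kernel X) w).
  move=> Z rF bZ hZ w Fw.
  have bK : bifix_code (kernel Z) by apply: (bifix_sub _ bZ) => x [].
  have hd := hZ.1 _ Fw.
  have b1 := bridge w bZ; have b2 := bridge w bK.
  have hk := occ_kernel_le Z w.
  case: (classic (exists p s, p <> [::] /\ s <> [::] /\ Z (p ++ w ++ s))).
    move=> [p [s [pn [sn hs]]]].
    have e := occ_kernel_eq pn sn hs.
    have -> : delta (kernel Z) w = delta Z w.
      by move: b1 b2; rewrite e -!plusE => b1 b2; lia.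
    by apply/esym/minn_idPr.
  move=> nex.
  have nw : nonint Z w by move=> p s pn sn hs; apply: nex; exists p, s.
  have l := key_lemma rF bZ hZ Fw nw.
  have dK : d <= delta (kernel Z) w.
    move: hk l b1 b2; rewrite -!plusE => /leP hk /leP l b1 b2; apply/leP; lia.
  rewrite (minn_idPl dK); apply/eqP; rewrite eqn_leq hd l.
  by [].
move=> rF XF bX hX; split; first exact: part1.
move=> Y YF bY hY hK.
have eK : kernel Y = kernel X.
  by apply: functional_extensionality => x; apply: propositional_extensionality.
have dE : forall w, F w -> delta Y w = delta X w.
  by move=> w Fw; rewrite (part1 _ rF bX hX _ Fw) (part1 _ rF bY hY _ Fw) eK.
have oE : forall w, F w -> occ Y w = occ X w.
  move=> w Fw; move: (bridge w bY) (bridge w bX) (dE _ Fw).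
  rewrite -!plusE => h1 h2 h3; lia.
have fac := rF.2.1.
have nE : forall u, F u -> pb (in_AY Y u) = pb (in_AY X u).
  move=> u Fu; suff h : nsuf Y u = nsuf X u.
    by move: h; rewrite !nsufE //; case: (pb _); case: (pb _).
  case/lastP: u Fu => [|W a] Fu; first by rewrite /nsuf !big_ord0.
  have FW : F W by apply: (fac _ [::] W [:: a] Fu); rewrite /= cats1.
  move: (occ_rcons Y W a) (occ_rcons X W a) (oE _ Fu) (oE _ FW).
  rewrite -!plusE => h1 h2 h3 h4; lia.
have iE : forall u, F u -> (in_AY Y u <-> in_AY X u).
  move=> u Fu; have := nE u Fu.
  by case: (pbP (in_AY Y u)); case: (pbP (in_AY X u)).
case: bX => neX [pcX scX]; case: bY => neY [pcY scY].
move=> x; split=> hx.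
  have Fx := YF _ hx.
  have [p [x' [e Xx']]] : in_AY X x by apply/iE => //; exists [::], x.
  have [q [y' [e' Yy']]] : in_AY Y x' by apply/iE => //; [exact: XF | exists [::], x'].
  have pq : p ++ q = [::] by apply: (scY _ _ _ Yy' hx); rewrite e e' catA.
  have p0 : p = [::] by case: (p) pq.
  by move: e; rewrite p0 /= => ->.
have Fx := XF _ hx.
have [p [x' [e Yx']]] : in_AY Y x by apply/iE => //; exists [::], x.
have [q [y' [e' Xy']]] : in_AY X x' by apply/iE => //; [exact: YF | exists [::], x'].
have pq : p ++ q = [::] by apply: (scX _ _ _ Xy' hx); rewrite e e' catA.
have p0 : p = [::] by case: (p) pq.
by move: e; rewrite p0 /= => ->.
Qed.
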